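(* Let $2\le r\le n$ be integers and fix positive integers $s_2,\ldots,s_r$. Then there exists an integer $M$ (depending on $n$ and $(s_2,\ldots,s_r)$) such that $H_n(s_1,s_2,\ldots,s_r)$ is not an integer for every integer $s_1>M$.
   Context: $H_n(s_1,\ldots,s_r)=\sum_{1\le k_1<k_2<\cdots<k_r\le n}\frac{1}{k_1^{s_1}\cdots k_r^{s_r}}$, where $s_1,\dots,s_r$ are positive integers. *)

(* Defs.v *)
From HB Require Import structures.
From mathcomp Require Import all_boot all_order all_algebra.
Set Implicit Arguments. Unset Strict Implicit. Unset Printing Implicit Defensive.
Import Order.TTheory GRing.Theory Num.Theory.
Local Open Scope ring_scope.

(* Hsum lo n [:: s_1; ...; s_r] =
     sum over lo <= k_1 < k_2 < ... < k_r <= n of 1/(k_1^s_1 ... k_r^s_r). *)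
Fixpoint Hsum (lo n : nat) (s : seq nat) : rat :=
  match s with
  | [::] => 1
  | a :: s' => \sum_(lo <= k < n.+1) ((k%:R ^+ a)^-1 * Hsum k.+1 n s')
  end.

Definition H (n : nat) (s : seq nat) : rat := Hsum 1 n s.

(* Main.v *)
Require Import Defs.
From HB Require Import structures.
From mathcomp Require Import all_boot all_order all_algebra.
From mathcomp Require Import zify ring lra.
Import Order.TTheory GRing.Theory Num.Theory.
Local Open Scope ring_scope.

Lemma Hsum_ge0 lo n s : 0 <= Hsum lo n s.
Proof.
elim: s lo => [|a s IH] lo /=; first by [].
apply: sumr_ge0 => k _; apply: mulr_ge0 => //.
by rewrite invr_ge0 exprn_ge0.
Qed.

Lemma Hsum0 s lo n : (n.+1 - lo < size s)%N -> Hsum lo n s = 0.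
Proof.
elim: s lo => [|a s IH] lo /=; first by [].
move=> Hs; rewrite big_nat_cond; apply: big1 => k /andP[/andP[H1 H2] _].
rewrite IH ?mulr0 //; lia.
Qed.

Lemma Hsum_split lo n a s : (lo <= n)%N ->
  Hsum lo n (a :: s) = (lo%:R ^+ a)^-1 * Hsum lo.+1 n s +
    \sum_(lo.+1 <= k < n.+1) ((k%:R ^+ a)^-1 * Hsum k.+1 n s).
Proof. by move=> H; rewrite /= big_ltn. Qed.

Lemma Hsum_gt0 s lo n : (0 < lo)%N -> (size s <= n.+1 - lo)%N -> 0 < Hsum lo n s.
Proof.
elim: s lo => [|a s IH] lo /=; first by [].
move=> Hlo Hs; rewrite big_ltn; last by lia.
apply: ltr_wpDr; first by apply: sumr_ge0 => k _; apply: mulr_ge0;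
  [rewrite invr_ge0 exprn_ge0 | apply: Hsum_ge0].
apply: mulr_gt0; last by apply: IH; lia.
by rewrite invr_gt0 exprn_gt0 // ltr0n.
Qed.

Lemma Hsum_le1 s lo n : (0 < lo)%N -> size s = (n.+1 - lo)%N -> Hsum lo n s <= 1.
Proof.
elim: s lo => [|a s IH] lo /=; first by [].
move=> Hlo Hs; rewrite big_ltn; last by lia.
rewrite big_nat_cond big1; last first.
  move=> k /andP[/andP[H1 H2] _]; rewrite Hsum0 ?mulr0 //; lia.
rewrite addr0 -[1]mulr1; apply: ler_pM.
- by rewrite invr_ge0 exprn_ge0.
- exact: Hsum_ge0.
- rewrite invf_le1 ?exprn_gt0 ?ltr0n //; apply: exprn_ege1; rewrite ler1n //.
- apply: IH; lia.
Qed.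
Theorem lemma3 (n r : nat) (s' : seq nat) :
  (2 <= r)%N -> (r <= n)%N -> size s' = r.-1 -> all (fun a => 0 < a)%N s' ->
  exists M : nat, forall s1 : nat, (M < s1)%N ->
    forall z : int, H n (s1 :: s') <> z%:~R.
Proof.
move=> Hr Hrn Hsz Hpos.
set A := Hsum 2 n s'.
set C := \sum_(2 <= k < n.+1) Hsum k.+1 n s'.
set f := Num.floor A.
have [Af1 Af2] : f%:~R <= A /\ A < (f + 1)%:~R.
  by have /andP[] := floor_itv A.
set delta : rat := if A == f%:~R then 1 else (f + 1)%:~R - A.
have dpos : 0 < delta by rewrite /delta; case: eqP => _ //; rewrite subr_gt0.
have dle : delta <= (f + 1)%:~R - A.
  rewrite /delta; case: eqP => [->|_] //; rewrite intrD addrC addKr //.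
have C0 : 0 <= C by apply: sumr_ge0 => k _; apply: Hsum_ge0.
set M := Num.Def.archi_bound (C / delta).
exists M => s1 HM z Hz.
have Hdec : H n (s1 :: s') = A + \sum_(2 <= k < n.+1) ((k%:R ^+ s1)^-1 * Hsum k.+1 n s').
  by rewrite /H Hsum_split; last lia; rewrite expr1n invr1 mul1r.
set E := \sum_(2 <= k < n.+1) _ in Hdec.
have E0 : 0 <= E.
  apply: sumr_ge0 => k _; apply: mulr_ge0; [by rewrite invr_ge0 exprn_ge0|exact: Hsum_ge0].
have p2 : 0 < (2%:R ^+ s1 : rat) by rewrite exprn_gt0.
have EC : E <= (2%:R ^+ s1)^-1 * C.
  rewrite /E /C mulr_sumr big_nat_cond [X in _ <= X]big_nat_cond.
  apply: ler_sum => k /andP[/andP[H1 H2] _].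
  apply: ler_wpM2r; first exact: Hsum_ge0.
  rewrite lef_pV2 ?posrE ?exprn_gt0 ?ltr0n //; last lia.
  rewrite -!natrX ler_nat leq_exp2r //; lia.
have Cd : C < delta * 2%:R ^+ s1.
  have := archi_boundP (divr_ge0 C0 (ltW dpos)); rewrite -/M.
  rewrite ltr_pdivrMr // => HC; apply: (lt_le_trans HC).
  rewrite mulrC ler_wpM2l ?(ltW dpos) // -natrX ler_nat.
  apply: ltnW; apply: leq_trans HM _; apply: ltnW; exact: ltn_expl.
have Elt : E < delta.
  by apply: (le_lt_trans EC); rewrite ltr_pdivrMl // mulrC.
have Hup : A + E < (f + 1)%:~R.
  have := lt_le_trans Elt dle; lra.
have Hlow : f%:~R < A + E.
  move: dle; rewrite /delta; case: eqP => [Aeq _|Ane _]; last first.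
    have : f%:~R < A by rewrite lt_neqAle Af1 andbT; apply/eqP => e; apply: Ane; rewrite e.
    lra.
  (* A is an integer: need E > 0 *)
  case: (ltnP r n) => Hrn'.
  - rewrite Aeq ltrDl.
    apply: (@lt_le_trans _ _ ((2%:R ^+ s1)^-1 * Hsum 3 n s')).
      apply: mulr_gt0; first by rewrite invr_gt0.
      apply: Hsum_gt0 => //; lia.
    rewrite /E big_ltn; last lia.
    rewrite lerDl; apply: sumr_ge0 => k _; apply: mulr_ge0;
      [by rewrite invr_ge0 exprn_ge0|exact: Hsum_ge0].
  - exfalso.
    have Ern : r = n by apply/eqP; rewrite eqn_leq Hrn Hrn'.
    case Es: s' => [|a t]; first by rewrite Es in Hsz; simpl in Hsz; lia.
    rewrite Es in Hsz Hpos.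
    have St : size t = (n - 2)%N by move: Hsz => /= Hsz; clear -Hsz Hr Ern; lia.
    have Apos : 0 < A by rewrite /A Es; apply: Hsum_gt0 => //; rewrite /= St; clear -Hr Ern; lia.
    have Alt : A < 1.
      rewrite /A Es Hsum_split; last by clear -Hr Ern; lia.
      rewrite big_nat_cond big1; last first.
        move=> k /andP[/andP[H1 H2] _]; rewrite Hsum0 ?mulr0 // St; clear -H1 H2; lia.
      rewrite addr0; apply: (@le_lt_trans _ _ ((2%:R ^+ a)^-1)).
        rewrite -[X in _ <= X]mulr1; apply: ler_wpM2l; first by rewrite invr_ge0 exprn_ge0.
        apply: Hsum_le1 => //; rewrite St; clear -Hr Ern; lia.
      move: Hpos => /= /andP[Ha _].
      rewrite invf_lt1 ?exprn_gt0 // -natrX ltr1n.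
      by case: (a) Ha => // a' _; rewrite expnS; have := expn_gt0 2 a'; clear; lia.
    rewrite Aeq in Apos Alt.
    rewrite ltr0z in Apos; rewrite -[1]/(1%:~R) ltr_int in Alt; clear -Apos Alt; lia.
rewrite -Hdec Hz in Hup Hlow.
rewrite ltr_int in Hup; rewrite ltr_int in Hlow; clear -Hup Hlow; lia.
Qed.
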